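(* (1) For every gauge function $f$ there is an increasing $g\in\omega^\omega$ such that $\mathcal{I}_g\subseteq\mathcal{N}^f$. (2) For every increasing $g\in\omega^\omega$ there is a gauge function $f$ such that $\mathcal{N}^f\subseteq\mathcal{I}_g$.
   Context: $2^\omega$ carries the metric $d(x,y)=2^{-\min\{n:x(n)\neq y(n)\}}$ for $x\neq y$ and $d(x,x)=0$. A gauge function is a nondecreasing $f\colon[0,\infty)\to[0,\infty)$ with $f(0)=0$, $\lim_{x\to0}f(x)=0$; $\mathcal{H}^f(A)=\lim_{\delta\to0}\inf\{\sum_nf(\operatorname{diam}C_n):A\subseteq\bigcup_nC_n,\ \operatorname{diam}C_n\le\delta\}$ and $\mathcal{N}^f=\{A\subseteq2^\omega:\mathcal{H}^f(A)=0\}$. For $\sigma\in(2^{<\omega})^\omega$, $(\operatorname{ht}\sigma)(n)=|\sigma(n)|$ and $[\sigma]_\infty=\{x\in2^\omega:\exists^\infty n\ \sigma(n)\subseteq x\}$; for $g\in\omega^\omega$, $\mathcal{J}_g=\{A\subseteq2^\omega:\exists\sigma\in(2^{<\omega})^\omega\,(\operatorname{ht}\sigma=g\wedge A\subseteq[\sigma]_\infty)\}$. For $f,g\in\omega^\omega$, $f\ll g$ iff for every $k$, $f(n^k)\le g(n)$ for all but finitely many $n$. For increasing $f\in\omega^\omega$, the Yorioka ideal is $\mathcal{I}_f=\bigcup_{g\gg f}\mathcal{J}_g$. *)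

(* Defs.v *)
From HB Require Import structures.
From mathcomp Require Import all_boot all_order all_algebra.
From mathcomp Require Import all_classical all_reals all_analysis.
Set Implicit Arguments. Unset Strict Implicit. Unset Printing Implicit Defensive.
Import Order.TTheory GRing.Theory Num.Theory.
Import numFieldNormedType.Exports.
Local Open Scope classical_set_scope.
Local Open Scope ring_scope.

Definition cantor := nat -> bool.

Definition cdist {R : realType} (x y : cantor) : R :=
  match pselect (exists n, x n != y n) with
  | left h => (2%:R ^- ex_minn h)
  | right _ => 0
  end.

(* diameter (sup of the distances; diam of the empty set is sup set0 = 0) *)
Definition cdiam {R : realType} (C : set cantor) : R :=
  sup [set cdist x y | x in C & y in C].

Definition gauge {R : realType} (f : R -> R) : Prop :=
  (forall x y : R, 0 <= x -> x <= y -> f x <= f y) /\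
  (forall x : R, 0 <= x -> 0 <= f x) /\
  f 0 = 0 /\
  f x @[x --> 0^'+] --> 0.

Definition hausdorff_delta {R : realType} (f : R -> R) (delta : R)
    (A : set cantor) : \bar R :=
  ereal_inf [set s | exists C : nat -> set cantor,
     [/\ A `<=` \bigcup_n C n,
         (forall n, cdiam (C n) <= delta) &
         s = (\sum_(0 <= n <oo) (f (cdiam (C n)))%:E)%E]].

Definition hausdorff {R : realType} (f : R -> R) (A : set cantor) : \bar R :=
  lim ((fun delta => hausdorff_delta f delta A) @ 0^'+).

Definition nullf {R : realType} (f : R -> R) (A : set cantor) : Prop :=
  hausdorff f A = 0%E.

Definition is_init (s : seq bool) (x : cantor) : Prop :=
  forall i, (i < size s)%N -> x i = nth false s i.

Definition inf_often_set (sigma : nat -> seq bool) : set cantor :=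
  [set x | forall m, exists n, (m <= n)%N /\ is_init (sigma n) x].

Definition J_ideal (g : nat -> nat) (A : set cantor) : Prop :=
  exists sigma : nat -> seq bool,
    (forall n, size (sigma n) = g n) /\ A `<=` inf_often_set sigma.

Definition llt (f g : nat -> nat) : Prop :=
  forall k, exists N, forall n, (N <= n)%N -> (f (n ^ k) <= g n)%N.

Definition incr (f : nat -> nat) : Prop := forall m n, (m < n)%N -> (f m < f n)%N.

Definition yorioka (f : nat -> nat) (A : set cantor) : Prop :=
  exists g, llt f g /\ J_ideal g A.

(* Main.v *)
Require Import Defs.
From HB Require Import structures.
From mathcomp Require Import all_boot all_order all_algebra.
From mathcomp Require Import all_classical all_reals all_analysis.
From mathcomp Require Import ring lra zify.
Import Order.TTheory GRing.Theory Num.Theory.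
Local Open Scope classical_set_scope.
Local Open Scope ring_scope.

Section S.
Context {R : realType}.

Lemma p2V_ge0 (n : nat) : 0 <= (2 ^- n : R).
Proof. by rewrite invr_ge0 exprn_ge0. Qed.

Lemma p2V_le (m n : nat) : (m <= n)%N -> (2 ^- n : R) <= 2 ^- m.
Proof.
move=> mn; rewrite lef_pV2 ?posrE ?exprn_gt0 //.
by rewrite ler_eXn2l // ltr1n.
Qed.

Lemma p2V_lt (m n : nat) : (m < n)%N -> (2 ^- n : R) < 2 ^- m.
Proof.
move=> mn; rewrite ltf_pV2 ?posrE ?exprn_gt0 //.
by rewrite ltr_eXn2l // ltr1n.
Qed.

Lemma cdist_le (x y : cantor) (L : nat) :
  (forall i, (i < L)%N -> x i = y i) -> @cdist R x y <= 2 ^- L.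
Proof.
move=> H; rewrite /cdist; case: pselect => [h|_]; last exact: p2V_ge0.
case: ex_minnP => m /eqP xm _; apply: p2V_le.
by rewrite leqNgt; apply/negP => /H.
Qed.

Lemma cdist_le_inv (x y : cantor) (L : nat) :
  @cdist R x y <= 2 ^- L -> forall i, (i < L)%N -> x i = y i.
Proof.
move=> H i iL; apply/eqP/negPn/negP => xi.
move: H; rewrite /cdist; case: pselect => [h|nh]; last by exfalso; apply: nh; exists i.
case: ex_minnP => m _ /(_ i xi) mi.
by rewrite leNgt (@p2V_lt m L (leq_ltn_trans mi iL)).
Qed.

Lemma cdist0 (x y : cantor) : @cdist R x y = 0 -> x = y.
Proof.
rewrite /cdist; case: pselect => [h|nh] //.
  by move/eqP; rewrite invr_eq0 expf_eq0 pnatr_eq0 andbF.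
move=> _; apply: funext => i; apply/eqP/negPn/negP => hi; apply: nh; by exists i.
Qed.

Lemma cdist_ge0 (x y : cantor) : 0 <= @cdist R x y.
Proof. by rewrite /cdist; case: pselect => // h; exact: p2V_ge0. Qed.

Lemma cdist_le1 (x y : cantor) : @cdist R x y <= 1.
Proof. by have := @cdist_le x y 0 (fun i (hi : (i < 0)%N) => ltac:(by rewrite ltn0 in hi)); rewrite expr0 invr1. Qed.

Lemma cdist_xx (x : cantor) : @cdist R x x = 0.
Proof. by rewrite /cdist; case: pselect => // h; exfalso; case: h => i; rewrite eqxx. Qed.

Definition dset (C : set cantor) : set R := [set cdist x y | x in C & y in C].

Lemma dset_hasub C : has_ubound (dset C).
Proof. by exists 1 => _ [x _ [y _ <-]]; exact: cdist_le1. Qed.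

Lemma cdiam_ub C x y : C x -> C y -> @cdist R x y <= cdiam C.
Proof.
move=> Cx Cy; apply: sup_upper_bound; last by exists x => //; exists y.
by split; [exists (cdist x y); exists x => //; exists y|exact: dset_hasub].
Qed.

Lemma cdiam_ge0 C : 0 <= @cdiam R C.
Proof.
have [[x Cx]|C0] := pselect (C !=set0).
  by rewrite -(cdist_xx x); exact: cdiam_ub.
have -> : C = set0 by apply/seteqP; split => // x Cx; apply: C0; exists x.
rewrite /cdiam.
have -> : [set cdist x y | x in set0 & y in set0] = (@set0 R).
  by apply/seteqP; split => // _ [x []].
by rewrite sup0.
Qed.

Lemma cdiam_le C (r : R) : 0 <= r -> (forall x y, C x -> C y -> cdist x y <= r) ->
  cdiam C <= r.
Proof.
move=> r0 H; have [[x Cx]|C0] := pselect (C !=set0).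
  apply: ge_sup; first by exists (cdist x x); exists x => //; exists x.
  by move=> _ [a Ca [b Cb <-]]; exact: H.
have -> : C = set0 by apply/seteqP; split => // x Cx; apply: C0; exists x.
rewrite /cdiam.
have -> : [set cdist x y | x in set0 & y in set0] = (@set0 R).
  by apply/seteqP; split => // _ [x []].
by rewrite sup0.
Qed.
End S.

Section P1.
Context {R : realType}.

Lemma p2V_small (e : R) : 0 < e -> exists M, forall M', (M <= M')%N -> (2 ^- M' : R) < e.
Proof.
move=> e0; exists (Num.Def.archi_bound e^-1) => M' hM.
have := upper_nthrootP hM.
by rewrite -[in X in _ -> X](invrK e) ltf_pV2 ?posrE ?exprn_gt0 ?invr_gt0.
Qed.

Lemma gauge_small (f : R -> R) : gauge f -> forall n : nat,
  exists L, forall L', (L <= L')%N -> f (2 ^- L') <= 2 ^- n.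
Proof.
move=> [_ [_ [_ H]]] n.
have := H; move/cvgrPdist_lt/(_ (2 ^- n) _) => [|d /= d0 Hd].
  by rewrite invr_gt0 exprn_gt0.
have [M HM] := @p2V_small d d0; exists M => L' hL.
have := Hd (2 ^- L'); rewrite /ball_ /= sub0r normrN ger0_norm ?p2V_ge0 //.
move=> /(_ (HM _ hL)); rewrite invr_gt0 exprn_gt0 // => /(_ isT).
rewrite sub0r normrN => /ltW; exact: le_trans (ler_norm _).
Qed.

Lemma geom_partial (M K : nat) : \sum_(0 <= i < K) (2 ^- (i + M) : R) <= 2 * 2 ^- M.
Proof.
suff : \sum_(0 <= i < K) (2 ^- (i + M) : R) = 2 * 2 ^- M - 2 * 2 ^- (K + M).
  move=> ->; rewrite lerBlDr lerDl mulr_ge0 //; exact: p2V_ge0.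
elim: K => [|K IH]; first by rewrite big_geq // add0n subrr.
rewrite big_nat_recr //= IH -addrA; congr (_ + _).
rewrite addSn exprS.
have h2 : (2 : R) != 0 by rewrite pnatr_eq0.
have hy : (2 ^+ (K + M) : R) != 0 by rewrite expf_eq0 (negbTE h2) andbF.
by field.
Qed.

Lemma nneseries_le_ub (u : nat -> \bar R) (c : \bar R) :
  (forall n, (0 <= u n)%E) -> (forall K, (\sum_(0 <= i < K) u i <= c)%E) ->
  (\sum_(0 <= i <oo) u i <= c)%E.
Proof.
move=> u0 Hc.
have : nondecreasing_seq (fun K => \sum_(0 <= i < K) u i)%E.
  by apply: ereal_nondecreasing_series => n _ _; exact: u0.
move/ereal_nondecreasing_cvgn/cvg_lim => -> //.
by apply: ge_ereal_sup => _ [K _ <-]; exact: Hc.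
Qed.

Definition cyl (s : seq bool) : set cantor := [set x | is_init s x].

Lemma cdiam_cyl s : @cdiam R (cyl s) <= 2 ^- (size s).
Proof.
apply: cdiam_le; first exact: p2V_ge0.
by move=> x y Hx Hy; apply: cdist_le => i hi; rewrite Hx // Hy.
Qed.

End P1.

Section P1b.
Context {R : realType}.

Lemma xget_ok {T : choiceType} (x0 : T) (P : set T) : (exists x, P x) -> P (xget x0 P).
Proof. by move=> [x Px]; case: xgetP => // /(_ x). Qed.

Lemma part1 (f : R -> R) : gauge f ->
  exists g : nat -> nat, incr g /\ forall A : set cantor, yorioka g A -> nullf f A.
Proof.
move=> gf; have hf := gauge_small f gf.
pose P n := fun L => forall L', (L <= L')%N -> f (2 ^- L') <= 2 ^- n.
pose t n := xget 0%N (P n).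
have ht n L' : (t n <= L')%N -> f (2 ^- L') <= 2 ^- n.
  by move=> hL; exact: (xget_ok 0%N (P n) (hf n) L' hL).
pose g n := \sum_(i < n.+1) (t i).+1.
have gS n : (g n < g n.+1)%N.
  by rewrite /g [X in (_ < X)%N]big_ord_recr /= -addn1 leq_add2l.
have ginc : incr g by move=> m n; apply: (homo_ltn ltn_trans gS).
have gt n : (t n <= g n)%N.
  by rewrite /g big_ord_recr /= (leq_trans (leqnSn _)) // leq_addl.
have gn n : (n <= g n)%N.
  elim: n => // n IH; exact: (leq_ltn_trans IH (gS n)).
exists g; split => // A [h [Hl [sigma [Hs HA]]]].
have [N HN] := Hl 1%N.
have key n : (N <= n)%N -> f (2 ^- h n) <= 2 ^- n.
  move=> Nn; apply: ht; apply: (leq_trans (gt n)).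
  by have := HN n Nn; rewrite expn1.
have hn n : (N <= n)%N -> (n <= h n)%N.
  move=> Nn; apply: (leq_trans (gn n)); by have := HN n Nn; rewrite expn1.
have claim d : 0 < d -> hausdorff_delta f d A = 0%E.
  move=> d0; apply/eqP; rewrite eq_le; apply/andP; split; last first.
    apply: le_ereal_inf_tmp => _ [C [_ _ ->]]; apply: nneseries_ge0 => n _ _.
    by rewrite lee_fin; apply: gf.2.1; exact: cdiam_ge0.
  apply/lee_addgt0Pr => e e0; rewrite add0e.
  have [M1 HM1] := @p2V_small R d d0.
  have e20 : 0 < e / 2 by rewrite divr_gt0.
  have [M2 HM2] := @p2V_small R (e / 2) e20.
  pose M := maxn N (maxn M1 M2).
  have NM : (N <= M)%N by rewrite leq_maxl.
  have M1M : (M1 <= M)%N by rewrite /M (leq_trans (leq_maxl M1 M2)) // leq_maxr.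
  have M2M : (M2 <= M)%N by rewrite /M (leq_trans (leq_maxr M1 M2)) // leq_maxr.
  apply: ge_ereal_inf.
  pose C i := cyl (sigma (i + M)%N).
  exists (\sum_(0 <= n <oo) (f (cdiam (C n)))%:E)%E.
    exists C; split => //.
      move=> x /HA /(_ M) [n [Mn hx]]; exists (n - M)%N => //.
      by rewrite /C subnK.
    move=> i; apply: (le_trans (cdiam_cyl _)); rewrite Hs.
    apply: ltW; apply: (le_lt_trans _ (HM1 M M1M)); apply: p2V_le.
    apply: (leq_trans _ (hn _ _)); first by rewrite leq_addl.
    by apply: leq_trans NM _; rewrite leq_addl.
  apply: nneseries_le_ub => [n|K].
    by rewrite lee_fin; apply: gf.2.1; exact: cdiam_ge0.
  rewrite sumEFin lee_fin.
  apply: (le_trans (y := \sum_(0 <= i < K) (2 ^- (i + M) : R))).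
    apply: ler_sum => i _.
    have NiM : (N <= i + M)%N by apply: leq_trans NM _; rewrite leq_addl.
    apply: le_trans (key _ NiM); apply: gf.1; first exact: cdiam_ge0.
    by have := cdiam_cyl (R := R) (sigma (i + M)); rewrite Hs.
  apply: (le_trans (geom_partial _ _)).
  rewrite -ler_pdivlMl // mulrC; exact: ltW (HM2 M M2M).
rewrite /nullf /hausdorff; apply: cvg_lim => //; apply: cvg_near_cst.
near=> d; apply: claim; near: d; exact: nbhs_right_gt.
Unshelve. all: by end_near.
Qed.
End P1b.

Section P2a.
Context {R : realType}.
Variable g : nat -> nat.
Hypothesis ginc : incr g.

Lemma g_mono m n : (m <= n)%N -> (g m <= g n)%N.
Proof. by rewrite leq_eqVlt => /orP [/eqP ->|/ginc /ltnW]. Qed.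

Definition G (p : nat) : nat := g (p ^ p).

Lemma G_mono p q : (p <= q)%N -> (G p <= G q)%N.
Proof.
move=> pq; apply: g_mono; case: p pq => [|p] pq.
  by rewrite expn0 expn_gt0; case: q pq.
apply: (@leq_trans (q ^ p.+1)); first by rewrite leq_exp2r.
by rewrite leq_pexp2l // (leq_trans _ pq).
Qed.

Definition sL (L : nat) : nat := \max_(i < L | (G (4 ^ i.+1) <= L)%N) (i : nat).

Lemma sL_attain {L} : (0 < sL L)%N -> (sL L < L)%N /\ (G (4 ^ (sL L).+1) <= L)%N.
Proof.
have : (sL L == 0)%N \/ ((sL L < L)%N /\ (G (4 ^ (sL L).+1) <= L)%N).
  rewrite /sL; apply: (big_ind (fun v => (v == 0)%N \/ ((v < L)%N /\ (G (4 ^ v.+1) <= L)%N))).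
  - by left.
  - move=> x y Hx Hy; rewrite /maxn; by case: ifP.
  - by move=> i Hi; right; split.
by case => [/eqP ->|].
Qed.

Lemma sL_ge L S : (S < L)%N -> (G (4 ^ S.+1) <= L)%N -> (S <= sL L)%N.
Proof.
move=> SL HG; rewrite /sL.
by apply: (@leq_bigmax_cond _ (fun i : 'I_L => (G (4 ^ i.+1) <= L)%N) (fun i => i : nat) (Ordinal SL)).
Qed.

Lemma sL_mono L L' : (L <= L')%N -> (sL L <= sL L')%N.
Proof.
move=> LL'; have [->//|s0] := posnP (sL L).
have [h1 h2] := sL_attain s0.
apply: sL_ge; first exact: leq_trans h1 LL'.
exact: leq_trans h2 LL'.
Qed.

Definition Lx (x : R) : nat :=
  match pselect (exists L : nat, 2 ^- L.+1 < x) with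
  | left h => ex_minn h
  | right _ => 0%N
  end.

Lemma Lx_spec {x} : 0 < x ->
  2 ^- (Lx x).+1 < x /\ (forall L, 2 ^- L.+1 < x -> (Lx x <= L)%N).
Proof.
move=> x0; rewrite /Lx; case: pselect => [h|nh].
  by case: ex_minnP.
exfalso; apply: nh; have [M HM] := p2V_small _ x0; exists M; exact: HM.
Qed.

Lemma Lx_le {x} : 0 < x -> x <= 1 -> x <= 2 ^- (Lx x).
Proof.
move=> x0 x1; have [h1 h2] := Lx_spec x0.
case E: (Lx x) => [|L]; first by rewrite expr0 invr1.
rewrite leNgt; apply/negP => /h2; by rewrite E ltnn.
Qed.

Lemma Lx_anti {x y} : 0 < x -> x <= y -> (Lx y <= Lx x)%N.
Proof.
move=> x0 xy; have [h1 _] := Lx_spec x0.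
have [_ h2] := Lx_spec (lt_le_trans x0 xy).
by apply: h2; exact: lt_le_trans h1 xy.
Qed.

Lemma Lx_big {x L0} : 0 < x -> x <= 2 ^- L0 -> (L0 <= Lx x)%N.
Proof.
move=> x0 xL; have [h1 _] := Lx_spec x0.
rewrite leqNgt; apply/negP => hlt.
have := le_lt_trans (p2V_le _ _ hlt) h1; by rewrite ltNge xL.
Qed.

Definition F (x : R) : R := if x <= 0 then 0 else 2 ^- sL (Lx x).

Lemma F_ge0 x : 0 <= F x.
Proof. by rewrite /F; case: ifP => // _; exact: p2V_ge0. Qed.

Lemma F_pos {x} : 0 < x -> F x = 2 ^- sL (Lx x).
Proof. by move=> x0; rewrite /F leNgt x0. Qed.

Lemma gaugeF : gauge F.
Proof.
split; [|split; [|split]].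
- move=> x y x0 xy; rewrite /F.
  case: ifP => [_|]; first by case: ifP => // _; exact: p2V_ge0.
  move/negbT; rewrite -ltNge => xp.
  rewrite ifF; last by apply/negbTE; rewrite -ltNge; exact: lt_le_trans xp xy.
  apply: p2V_le; apply: sL_mono; exact: Lx_anti.
- by move=> x _; exact: F_ge0.
- by rewrite /F lexx.
- apply/cvgrPdist_lt => e e0.
  have [S HS] := p2V_small _ e0.
  pose L0 := maxn (G (4 ^ S.+1)) S.+1.
  near=> x.
  have x0 : 0 < x by near: x; exact: nbhs_right_gt.
  have xs : x <= 2 ^- L0.
    near: x; apply: nbhs_right_le; by rewrite invr_gt0 exprn_gt0.
  rewrite sub0r normrN ger0_norm ?F_ge0 // F_pos //.
  apply: HS; apply: sL_ge.
    by apply: leq_trans (Lx_big x0 xs); rewrite leq_maxr.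
  by apply: leq_trans (Lx_big x0 xs); rewrite leq_maxl.
Unshelve. all: by end_near.
Qed.

End P2a.

Section P2b.
Context {R : realType}.

Lemma null_covers (f : R -> R) (A : set cantor) : gauge f -> nullf f A ->
  forall e : R, 0 < e -> exists C : nat -> set cantor,
    A `<=` \bigcup_n C n /\ (\sum_(0 <= n <oo) (f (cdiam (C n)))%:E < e%:E)%E.
Proof.
move=> gf nA e e0.
pose H := fun d => hausdorff_delta f d A.
have Hni : {in Interval (BRight (0:R)) (BInfty _ false) &,
    {homo H : n m / n <= m >-> (m <= n)%E}}.
  move=> a b _ _ ab; apply: ereal_inf_le_tmp => _ [C [h1 h2 ->]].
  exists C; split => // n; exact: le_trans (h2 n) ab.
have cv := nonincreasing_at_right_cvge (BInfty _ false) isT Hni.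
have := nA; rewrite /nullf /hausdorff (cvg_lim _ cv) // => hs.
have H1 : (H 1%R <= 0)%E.
  rewrite -hs; apply: ereal_sup_ubound; exists (1:R) => //.
  by rewrite /= in_itv /= ltr01.
have /ereal_inf_lt [s [C [h1 _ ->]] hC] : (H 1%R < e%:E)%E.
  by apply: le_lt_trans H1 _; rewrite lte_fin.
by exists C.
Qed.

End P2b.

Lemma pigeon (phi : nat -> nat) : injective phi -> forall m, exists k, (m <= phi k)%N.
Proof.
move=> inj m; have [//|nH] := pselect (exists k, (m <= phi k)%N).
have H k : (phi k < m)%N.
  by rewrite ltnNge; apply/negP => hk; apply: nH; exists k.
pose h (i : 'I_m.+1) : 'I_m := Ordinal (H i).
have hinj : injective h.
  by move=> i j /(congr1 val) /= /inj; exact: val_inj.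
by have := leq_card h hinj; rewrite !card_ord ltnn.
Qed.

Lemma rank_lt (b : nat -> bool) n n' : (n < n')%N -> b n ->
  (\sum_(0 <= m < n) (b m : nat) < \sum_(0 <= m < n') (b m : nat))%N.
Proof.
move=> nn' bn.
rewrite [X in (_ < X)%N](@big_cat_nat _ _ _ n.+1) //= big_nat_recr //= bn.
lia.
Qed.

Lemma four_exp s : (4 ^ s = 2 ^ s * 2 ^ s)%N.
Proof. by rewrite -expnMn. Qed.

Lemma code_bound s k j : (k < s)%N -> (j < 2 ^ s)%N ->
  (2 * (4 ^ s + k * 2 ^ s + j) <= 4 ^ s.+1)%N.
Proof.
move=> ks js; rewrite expnS four_exp.
have sa : (s < 2 ^ s)%N := ltn_expl s (isT : (1 < 2)%N).
move: ks js sa; set a := (2 ^ s)%N => ks js sa.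
nia.
Qed.

Lemma code_lb s k j : (4 ^ s <= 4 ^ s + k * 2 ^ s + j)%N.
Proof. by rewrite -addnA leq_addr. Qed.

Lemma decode4 s k j s' k' j' : (k < s)%N -> (j < 2 ^ s)%N -> (k' < s')%N -> (j' < 2 ^ s')%N ->
  (4 ^ s + k * 2 ^ s + j = 4 ^ s' + k' * 2 ^ s' + j')%N ->
  [/\ s = s', k = k' & j = j'].
Proof.
move=> ks js ks' js' E.
have lt1 : forall s k j s' k' j', (k < s)%N -> (j < 2 ^ s)%N -> (s < s')%N ->
    (4 ^ s + k * 2 ^ s + j < 4 ^ s' + k' * 2 ^ s' + j')%N.
  move=> a b c a' b' c' ba ca aa'.
  have h1 := code_bound _ _ _ ba ca.
  have h2 : (4 ^ a.+1 <= 4 ^ a')%N by rewrite leq_exp2l.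
  have h3 := code_lb a' b' c'.
  have h4 : (0 < 4 ^ a)%N by rewrite expn_gt0.
  rewrite expnS in h1 h2; move: h1 h2 h3 h4; set X := (b * 2 ^ a)%N; set Y := (b' * 2 ^ a')%N; lia.
have ss' : s = s'.
  apply/eqP; rewrite eqn_leq; apply/andP; split; rewrite leqNgt; apply/negP => h.
    by have := lt1 _ _ _ _ k j ks' js' h; rewrite E ltnn.
  by have := lt1 _ _ _ _ k' j' ks js h; rewrite E ltnn.
subst s'; move/eqP: E; rewrite -!addnA eqn_add2l => /eqP E.
have a0 : (0 < 2 ^ s)%N by rewrite expn_gt0.
have hk : k = k'.
  by have := congr1 (divn^~ (2 ^ s)%N) E; rewrite /= !divnMDl // !divn_small // !addn0.
subst k'; split => //; apply/eqP; by rewrite -(eqn_add2l (k * 2 ^ s)) E.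
Qed.

Section Main.
Context {R : realType}.
Variable g : nat -> nat.
Hypothesis ginc : incr g.

Lemma part2 (A : set cantor) : nullf (F g : R -> R) A -> yorioka g A.
Proof.
move=> nA.
have cov k : exists C : nat -> set cantor, A `<=` \bigcup_n C n /\
    (\sum_(0 <= n <oo) (F g (cdiam (C n)))%:E < (2 ^- k : R)%:E)%E.
  by apply: (null_covers _ _ (gaugeF g) nA); rewrite invr_gt0 exprn_gt0.
have [Cv HCv] := choice cov.
pose D k n : R := cdiam (Cv k n).
pose cls k n := sL g (Lx (D k n)).
pose b k s m := (0 < D k m) && (cls k m == s).
pose rk k n := (\sum_(0 <= m < n) (b k (cls k n) m : nat))%N.
pose pos k n := if 0 < D k n then (2 * (4 ^ cls k n + k * 2 ^ cls k n + rk k n))%N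
  else (2 * pickle (k, n)).+1.
have count k n : 0 < D k n -> ((rk k n).+1 * 2 ^ k < 2 ^ cls k n)%N.
  move=> Dp; set s := cls k n.
  have h1 : ((rk k n).+1%:R * 2 ^- s : R) <=
      \sum_(0 <= m < n.+1) F g (D k m).
    apply: (@le_trans _ _ (\sum_(0 <= m < n.+1) ((b k s m)%:R * 2 ^- s : R))).
      rewrite -mulr_suml -natr_sum big_nat_recr //= /b Dp eqxx /= addn1.
      by [].
    apply: ler_sum => m _; rewrite /b.
    case: (boolP (0 < D k m)) => /= Dm; last by rewrite mul0r F_ge0.
    case: (boolP (cls k m == s)) => /= hc; last by rewrite mul0r F_ge0.
    by rewrite mul1r F_pos // -(eqP hc).
  have h2 : ((\sum_(0 <= m < n.+1) F g (D k m))%:E <=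
      \sum_(0 <= m <oo) (F g (D k m))%:E)%E.
    rewrite -sumEFin; apply: nneseries_lim_ge => m _ _; rewrite lee_fin; exact: F_ge0.
  have h3 : (rk k n).+1%:R / 2 ^+ s < (2 ^- k : R).
    rewrite -lte_fin; apply: le_lt_trans (HCv k).2; apply: le_trans h2.
    by rewrite lee_fin.
  rewrite -(ltr_nat R) natrM !natrX.
  move: h3; rewrite ltr_pdivrMr ?exprn_gt0 // mulrC ltr_pdivlMr ?exprn_gt0 //.
have props k n : 0 < D k n ->
    [/\ (0 < cls k n)%N, (k < cls k n)%N & (rk k n < 2 ^ cls k n)%N].
  move=> /count hc.
  have k1 : (0 < 2 ^ k)%N by rewrite expn_gt0.
  have ks : (k < cls k n)%N.
    rewrite -(@ltn_exp2l 2) //; move: hc k1; set X := (2 ^ k)%N; set Y := (2 ^ cls k n)%N.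
    nia.
  split => //; first exact: leq_ltn_trans (leq0n k) ks.
  move: hc k1; set X := (2 ^ k)%N; set Y := (2 ^ cls k n)%N; nia.
have pos_inj k n k' n' : pos k n = pos k' n' -> k = k' /\ n = n'.
  rewrite /pos; case: ifP => Dp; case: ifP => Dp' E; try lia.
    have [s0 ks js] := props k n Dp; have [s0' ks' js'] := props k' n' Dp'.
    have E' : (4 ^ cls k n + k * 2 ^ cls k n + rk k n =
        4 ^ cls k' n' + k' * 2 ^ cls k' n' + rk k' n')%N by lia.
    have [ec ek er] := decode4 _ _ _ _ _ _ ks js ks' js' E'.
    subst k'; split => //.
    have bn : b k (cls k n) n by rewrite /b Dp eqxx.
    have bn' : b k (cls k n) n' by rewrite /b Dp' ec eqxx.
    case: (ltngtP n n') => // hn.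
      by have := rank_lt _ _ _ hn bn; rewrite -/(rk k n) ec -/(rk k n') er ltnn.
    by have := rank_lt _ _ _ hn bn'; rewrite ec -/(rk k n') -ec -/(rk k n) er ltnn.
  have : pickle (k, n) = pickle (k', n') by lia.
  by move/(pcan_inj pickleK) => [-> ->].
have agree k n x y : Cv k n x -> Cv k n y ->
    forall i, (i < G g (pos k n))%N -> x i = y i.
  move=> Cx Cy; rewrite /pos; case: ifP => Dp.
    have [s0 ks js] := props k n Dp.
    have D1 : D k n <= 1.
      by apply: cdiam_le; [exact: ler01|move=> a c _ _; exact: cdist_le1].
    have DL := Lx_le Dp D1.
    have hG : (G g (2 * (4 ^ cls k n + k * 2 ^ cls k n + rk k n)) <= Lx (D k n))%N.
      apply: (leq_trans _ (sL_attain g s0).2).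
      exact: (G_mono g ginc _ _ (code_bound _ _ _ ks js)).
    move=> i hi; apply: (cdist_le_inv x y (Lx (D k n))).
      exact: le_trans (cdiam_ub _ _ _ Cx Cy) DL.
    exact: leq_trans hi hG.
  have D0 : D k n <= 0 by rewrite leNgt Dp.
  have cd : cdist x y = 0 :> R.
    apply/eqP; rewrite eq_le cdist_ge0 andbT.
    exact: le_trans (cdiam_ub _ _ _ Cx Cy) D0.
  by move=> i _; rewrite (cdist0 _ _ cd).
pose kn p := xget (0%N, 0%N) (fun kn : nat * nat => pos kn.1 kn.2 = p).
pose yp p : cantor := match pselect (exists z, Cv (kn p).1 (kn p).2 z) with
  | left h => projT1 (cid h) | right _ => fun _ => false end.
pose sigma p := mkseq (yp p) (G g p).
have cover k n x : Cv k n x -> is_init (sigma (pos k n)) x.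
  move=> Cx.
  have hkn : kn (pos k n) = (k, n).
    have := xget_ok (0%N, 0%N) (fun kn : nat * nat => pos kn.1 kn.2 = pos k n)
      (ex_intro _ (k, n) erefl).
    rewrite -/(kn (pos k n)); case: (kn (pos k n)) => a c /= /pos_inj [-> ->].
    by [].
  have hy : Cv k n (yp (pos k n)).
    rewrite /yp hkn /=; case: pselect => [h|nh].
      exact: (projT2 (cid h)).
    by exfalso; apply: nh; exists x.
  move=> i; rewrite /sigma size_mkseq => hi; rewrite nth_mkseq //.
  exact: agree Cx hy i hi.
exists (G g); split.
  move=> kk; exists kk.+1 => n hn; apply: g_mono => //.
  by rewrite leq_pexp2l // ?(leq_trans _ hn) // ltnW.
exists sigma; split; first by move=> p; rewrite size_mkseq.
move=> x Ax m.
have hx k : exists n, Cv k n x by have [n _ hn] := (HCv k).1 x Ax; exists n.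
have [nk Hnk] := choice hx.
have inj : injective (fun k => pos k (nk k)) by move=> k k' /pos_inj [].
have [k hk] := pigeon _ inj m.
by exists (pos k (nk k)); split => //; exact: cover.
Qed.
End Main.

Theorem corollary3p6 (R : realType) :
  (forall f : R -> R, gauge f ->
     exists g : nat -> nat, incr g /\
       forall A : set cantor, yorioka g A -> nullf f A) /\
  (forall g : nat -> nat, incr g ->
     exists f : R -> R, gauge f /\
       forall A : set cantor, nullf f A -> yorioka g A).
Proof.
split; first by move=> f gf; exact: part1 f gf.
move=> g ginc; exists (F g); split; first exact: gaugeF.
by move=> A; exact: part2 g ginc A.
Qed.
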